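(* Let $A$ be a Banach algebra with $\mathrm{Ann}_l(A)=\{0\}$ and let $a_0\in Z(A)\setminus\{0\}$. Then for each integer $n\geq 3$, $S_{n}(A)$ is a commutative Banach subalgebra of $B(A)$.
   Context: $Z(A)$ is the center of $A$; $\mathrm{Ann}_l(A)=\{a\in A: ab=0\text{ for all }b\in A\}$. $Mul_n(A)$ is the set of bounded linear maps $T:A\to A$ with $T(a_1\cdots a_n)=a_1T(a_2\cdots a_n)=T(a_1\cdots a_{n-1})a_n$ for all $a_i\in A$. For $T\in Mul_n(A)$ let $T_{a_0,n}\in B(A)$ be $T_{a_0,n}(a)=T(a_0^{n-2}a)$; $M_{a_0,n}(A)=\{T_{a_0,n}:T\in Mul_n(A)\}$, and $S_n(A)$ is the closure of $M_{a_0,n}(A)$ in $B(A)$ in the operator norm. *)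

(* Defs.v *)
From Stdlib Require Import Reals.
Open Scope R_scope.

Record BanachAlgebra := {
  ba_car :> Type;
  ba_zero : ba_car;
  ba_add : ba_car -> ba_car -> ba_car;
  ba_opp : ba_car -> ba_car;
  ba_scal : R -> ba_car -> ba_car;
  ba_mul : ba_car -> ba_car -> ba_car;
  ba_norm : ba_car -> R;
  ba_addA : forall x y z, ba_add x (ba_add y z) = ba_add (ba_add x y) z;
  ba_addC : forall x y, ba_add x y = ba_add y x;
  ba_add0 : forall x, ba_add x ba_zero = x;
  ba_addN : forall x, ba_add x (ba_opp x) = ba_zero;
  ba_scalA : forall r s x, ba_scal r (ba_scal s x) = ba_scal (r * s) x;
  ba_scal1 : forall x, ba_scal 1 x = x;
  ba_scalDr : forall r x y, ba_scal r (ba_add x y) = ba_add (ba_scal r x) (ba_scal r y);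
  ba_scalDl : forall r s x, ba_scal (r + s) x = ba_add (ba_scal r x) (ba_scal s x);
  ba_mulA : forall x y z, ba_mul x (ba_mul y z) = ba_mul (ba_mul x y) z;
  ba_mulDl : forall x y z, ba_mul (ba_add x y) z = ba_add (ba_mul x z) (ba_mul y z);
  ba_mulDr : forall x y z, ba_mul x (ba_add y z) = ba_add (ba_mul x y) (ba_mul x z);
  ba_scal_mull : forall r x y, ba_scal r (ba_mul x y) = ba_mul (ba_scal r x) y;
  ba_scal_mulr : forall r x y, ba_scal r (ba_mul x y) = ba_mul x (ba_scal r y);
  ba_norm_eq0 : forall x, ba_norm x = 0 -> x = ba_zero;
  ba_norm_tri : forall x y, ba_norm (ba_add x y) <= ba_norm x + ba_norm y;
  ba_norm_scal : forall r x, ba_norm (ba_scal r x) = Rabs r * ba_norm x;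
  ba_norm_mul : forall x y, ba_norm (ba_mul x y) <= ba_norm x * ba_norm y;
  ba_complete : forall u : nat -> ba_car,
    (forall eps, eps > 0 -> exists N, forall p q, (p >= N)%nat -> (q >= N)%nat ->
        ba_norm (ba_add (u p) (ba_opp (u q))) < eps) ->
    exists l, forall eps, eps > 0 -> exists N, forall p, (p >= N)%nat ->
        ba_norm (ba_add (u p) (ba_opp l)) < eps
}.

Arguments ba_zero {_}.
Arguments ba_add {_}.
Arguments ba_opp {_}.
Arguments ba_scal {_}.
Arguments ba_mul {_}.
Arguments ba_norm {_}.

Section Defs.
Variable A : BanachAlgebra.

Definition ba_sub (x y : A) : A := ba_add x (ba_opp y).

Definition in_center (a : A) : Prop := forall b : A, ba_mul a b = ba_mul b a.

Definition left_annihilator_trivial : Prop :=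
  forall a : A, (forall b : A, ba_mul a b = ba_zero) -> a = ba_zero.

Definition bounded_linear (T : A -> A) : Prop :=
  (forall x y, T (ba_add x y) = ba_add (T x) (T y)) /\
  (forall r x, T (ba_scal r x) = ba_scal r (T x)) /\
  (exists M, forall x, ba_norm (T x) <= M * ba_norm x).

(* prodf a i k = a_i a_(i+1) ... a_(i+k)   (k+1 factors) *)
Fixpoint prodf (a : nat -> A) (i k : nat) : A :=
  match k with
  | O => a i
  | S k' => ba_mul (a i) (prodf a (S i) k')
  end.

(* Mul_n(A): T(a_1...a_n) = a_1 T(a_2...a_n) = T(a_1...a_(n-1)) a_n *)
Definition is_n_multiplier (n : nat) (T : A -> A) : Prop :=
  bounded_linear T /\
  forall a : nat -> A,
    T (prodf a 1 (n - 1)) = ba_mul (a 1%nat) (T (prodf a 2 (n - 2))) /\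
    T (prodf a 1 (n - 1)) = ba_mul (T (prodf a 1 (n - 2))) (a n).

(* a0^k a, written as k-fold left multiplication by a0 *)
Fixpoint lpow (a0 : A) (k : nat) (x : A) : A :=
  match k with
  | O => x
  | S k' => ba_mul a0 (lpow a0 k' x)
  end.

Definition T_a0n (a0 : A) (n : nat) (T : A -> A) : A -> A :=
  fun x => T (lpow a0 (n - 2) x).

Definition M_a0n (a0 : A) (n : nat) (U : A -> A) : Prop :=
  exists T, is_n_multiplier n T /\ forall x, U x = T_a0n a0 n T x.

(* ||U - V||_op <= eps, written out: ||U x - V x|| <= eps ||x|| for all x *)
Definition opdist_le (U V : A -> A) (eps : R) : Prop :=
  forall x, ba_norm (ba_sub (U x) (V x)) <= eps * ba_norm x.

Definition op_closure (S : (A -> A) -> Prop) (U : A -> A) : Prop :=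
  bounded_linear U /\
  forall eps, eps > 0 -> exists V, S V /\ opdist_le U V eps.

Definition S_n (a0 : A) (n : nat) : (A -> A) -> Prop := op_closure (M_a0n a0 n).

(* commutative Banach (= operator-norm closed) subalgebra of B(A) *)
Definition is_commutative_Banach_subalgebra (S : (A -> A) -> Prop) : Prop :=
  (forall U, S U -> bounded_linear U) /\
  S (fun _ => ba_zero) /\
  (forall U V, S U -> S V -> S (fun x => ba_add (U x) (V x))) /\
  (forall r U, S U -> S (fun x => ba_scal r (U x))) /\
  (forall U V, S U -> S V -> S (fun x => U (V x))) /\
  (forall U, op_closure S U -> S U) /\
  (forall U V, S U -> S V -> forall x, U (V x) = V (U x)).

End Defs.

(* Main.v *)
Require Import Defs.
From Stdlib Require Import Reals.
From Stdlib Require Import Lra Lia Psatz Arith.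
Open Scope R_scope.

Section G.
Variable A : BanachAlgebra.

Lemma add0l (x : A) : ba_add ba_zero x = x.
Proof. rewrite ba_addC; apply ba_add0. Qed.
Lemma addNl (x : A) : ba_add (ba_opp x) x = ba_zero.
Proof. rewrite ba_addC; apply ba_addN. Qed.
Lemma addKl (x y : A) : ba_add (ba_opp x) (ba_add x y) = y.
Proof. rewrite ba_addA, addNl, add0l; reflexivity. Qed.
Lemma add_cancel (x y z : A) : ba_add x y = ba_add x z -> y = z.
Proof. intro H; rewrite <- (addKl x y), H, addKl; reflexivity. Qed.
Lemma opp_uniq (x y : A) : ba_add x y = ba_zero -> y = ba_opp x.
Proof. intro H; apply (add_cancel x); rewrite H, ba_addN; reflexivity. Qed.
Lemma oppK (x : A) : ba_opp (ba_opp x) = x.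
Proof. symmetry; apply opp_uniq; apply addNl. Qed.
Lemma add_swap4 (a b c d : A) :
  ba_add (ba_add a b) (ba_add c d) = ba_add (ba_add a c) (ba_add b d).
Proof.
  rewrite <- !ba_addA; f_equal; rewrite !ba_addA, (ba_addC _ b c); reflexivity.
Qed.
Lemma oppD (x y : A) : ba_opp (ba_add x y) = ba_add (ba_opp x) (ba_opp y).
Proof.
  symmetry; apply opp_uniq. rewrite add_swap4, !ba_addN, ba_add0; reflexivity.
Qed.
Lemma sub_trans (a b c : A) : ba_sub A a c = ba_add (ba_sub A a b) (ba_sub A b c).
Proof.
  unfold ba_sub. rewrite <- ba_addA, (ba_addA _ (ba_opp b) b (ba_opp c)), addNl, add0l.
  reflexivity.
Qed.
Lemma sub_eq0 (p q : A) : ba_sub A p q = ba_zero -> p = q.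
Proof.
  unfold ba_sub; intro H. apply opp_uniq in H. rewrite <- (oppK p), <- H, oppK; reflexivity.
Qed.
Lemma sub_self (p : A) : ba_sub A p p = ba_zero.
Proof. apply ba_addN. Qed.
Lemma sub_add2 (a b c d : A) :
  ba_sub A (ba_add a b) (ba_add c d) = ba_add (ba_sub A a c) (ba_sub A b d).
Proof. unfold ba_sub; rewrite oppD; apply add_swap4. Qed.

Lemma scal0 (x : A) : ba_scal 0 x = ba_zero.
Proof.
  symmetry; apply (add_cancel (ba_scal 0 x)).
  rewrite <- ba_scalDl, Rplus_0_r, ba_add0; reflexivity.
Qed.
Lemma scalN1 (x : A) : ba_scal (- (1)) x = ba_opp x.
Proof.
  apply opp_uniq. rewrite <- (ba_scal1 _ x) at 1.
  rewrite <- ba_scalDl, Rplus_opp_r, scal0; reflexivity.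
Qed.
Lemma scalr0 r : ba_scal r (@ba_zero A) = ba_zero.
Proof. rewrite <- (scal0 ba_zero), ba_scalA, Rmult_0_r; reflexivity. Qed.
Lemma sub_scal r (a b : A) : ba_sub A (ba_scal r a) (ba_scal r b) = ba_scal r (ba_sub A a b).
Proof.
  unfold ba_sub. rewrite ba_scalDr, <- !scalN1, !ba_scalA, (Rmult_comm (- (1)) r).
  reflexivity.
Qed.

Lemma norm0 : ba_norm (@ba_zero A) = 0.
Proof. rewrite <- (scal0 ba_zero), ba_norm_scal, Rabs_R0, Rmult_0_l; reflexivity. Qed.
Lemma norm_opp (x : A) : ba_norm (ba_opp x) = ba_norm x.
Proof. rewrite <- scalN1, ba_norm_scal, Rabs_Ropp, Rabs_R1, Rmult_1_l; reflexivity. Qed.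
Lemma norm_ge0 (x : A) : 0 <= ba_norm x.
Proof. pose proof (ba_norm_tri _ x (ba_opp x)) as H. rewrite ba_addN, norm0, norm_opp in H; lra. Qed.
Lemma norm_sub_sym (a b : A) : ba_norm (ba_sub A a b) = ba_norm (ba_sub A b a).
Proof. rewrite <- norm_opp. unfold ba_sub; rewrite oppD, oppK, ba_addC; reflexivity. Qed.
Lemma norm_sub_tri (a b c : A) :
  ba_norm (ba_sub A a c) <= ba_norm (ba_sub A a b) + ba_norm (ba_sub A b c).
Proof. rewrite (sub_trans a b c); apply ba_norm_tri. Qed.
Lemma norm_le_sub (a b : A) : ba_norm b <= ba_norm a + ba_norm (ba_sub A a b).
Proof.
  assert (E : b = ba_add a (ba_sub A b a)).
  { unfold ba_sub. rewrite (ba_addC _ b), ba_addA, ba_addN, add0l; reflexivity. }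
  rewrite E at 1. rewrite norm_sub_sym. apply ba_norm_tri.
Qed.
Lemma norm_small (x : A) : (forall e, 0 < e -> ba_norm x <= e) -> x = ba_zero.
Proof.
  intro H; apply ba_norm_eq0. pose proof (norm_ge0 x).
  destruct (Rle_lt_dec (ba_norm x) 0). lra.
  specialize (H (ba_norm x / 2) ltac:(lra)). lra.
Qed.

Lemma mul0l (x : A) : ba_mul ba_zero x = ba_zero.
Proof.
  symmetry; apply (add_cancel (ba_mul ba_zero x)).
  rewrite <- ba_mulDl, !ba_add0; reflexivity.
Qed.
Lemma mul0r (x : A) : ba_mul x ba_zero = ba_zero.
Proof.
  symmetry; apply (add_cancel (ba_mul x ba_zero)).
  rewrite <- ba_mulDr, !ba_add0; reflexivity.
Qed.
Lemma mulNl (x y : A) : ba_mul (ba_opp x) y = ba_opp (ba_mul x y).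
Proof. apply opp_uniq; rewrite <- ba_mulDl, ba_addN, mul0l; reflexivity. Qed.
Lemma mul_subl (x y z : A) : ba_mul (ba_sub A x y) z = ba_sub A (ba_mul x z) (ba_mul y z).
Proof. unfold ba_sub; rewrite ba_mulDl, mulNl; reflexivity. Qed.

Lemma bl_zero' (T : A -> A) : bounded_linear A T -> T ba_zero = ba_zero.
Proof.
  intros [Ha [Hs _]]. rewrite <- (scal0 ba_zero) at 1. rewrite Hs, scal0; reflexivity.
Qed.
Lemma bl_sub (T : A -> A) x y : bounded_linear A T -> T (ba_sub A x y) = ba_sub A (T x) (T y).
Proof.
  intros [Ha [Hs _]]. unfold ba_sub. rewrite Ha, <- !scalN1, Hs; reflexivity.
Qed.
Lemma bl_bound (T : A -> A) : bounded_linear A T ->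
  exists M, 0 <= M /\ forall x, ba_norm (T x) <= M * ba_norm x.
Proof.
  intros [_ [_ [M HM]]]. exists (Rmax M 0); split. apply Rmax_r.
  intro x. eapply Rle_trans. apply HM. apply Rmult_le_compat_r. apply norm_ge0. apply Rmax_l.
Qed.
Lemma bl_ext (U V : A -> A) : (forall x, U x = V x) -> bounded_linear A V -> bounded_linear A U.
Proof.
  intros E [Ha [Hs [M HM]]]. split; [|split].
  - intros; rewrite !E; apply Ha.
  - intros; rewrite !E; apply Hs.
  - exists M; intros; rewrite E; apply HM.
Qed.
Lemma bl_comp (U V : A -> A) : bounded_linear A U -> bounded_linear A V ->
  bounded_linear A (fun x => U (V x)).
Proof.
  intros HU HV. pose proof (bl_bound U HU) as [MU [MU0 HMU]].
  pose proof (bl_bound V HV) as [MV [MV0 HMV]].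
  destruct HU as [Ua [Us _]]; destruct HV as [Va [Vs _]].
  split; [|split].
  - intros; rewrite Va, Ua; reflexivity.
  - intros; rewrite Vs, Us; reflexivity.
  - exists (MU * MV); intro x. eapply Rle_trans. apply HMU.
    rewrite Rmult_assoc. apply Rmult_le_compat_l; auto.
Qed.
Lemma bl_add (U V : A -> A) : bounded_linear A U -> bounded_linear A V ->
  bounded_linear A (fun x => ba_add (U x) (V x)).
Proof.
  intros HU HV. pose proof (bl_bound U HU) as [MU [MU0 HMU]].
  pose proof (bl_bound V HV) as [MV [MV0 HMV]].
  destruct HU as [Ua [Us _]]; destruct HV as [Va [Vs _]].
  split; [|split].
  - intros; rewrite Va, Ua; apply add_swap4.
  - intros; rewrite Vs, Us, ba_scalDr; reflexivity.
  - exists (MU + MV); intro x. eapply Rle_trans. apply ba_norm_tri.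
    specialize (HMU x); specialize (HMV x); lra.
Qed.
Lemma bl_scal r (U : A -> A) : bounded_linear A U ->
  bounded_linear A (fun x => ba_scal r (U x)).
Proof.
  intros HU. pose proof (bl_bound U HU) as [MU [MU0 HMU]].
  destruct HU as [Ua [Us _]].
  split; [|split].
  - intros; rewrite Ua, ba_scalDr; reflexivity.
  - intros; rewrite Us, !ba_scalA, Rmult_comm; reflexivity.
  - exists (Rabs r * MU); intro x. rewrite ba_norm_scal, Rmult_assoc.
    apply Rmult_le_compat_l; auto. apply Rabs_pos.
Qed.
Lemma bl_const0 : bounded_linear A (fun _ => ba_zero).
Proof.
  split; [|split].
  - intros; rewrite ba_add0; reflexivity.
  - intros; rewrite scalr0; reflexivity.
  - exists 0; intro; rewrite norm0; lra.
Qed.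
Lemma bl_lip (T : A -> A) M x y : bounded_linear A T -> (forall z, ba_norm (T z) <= M * ba_norm z) ->
  ba_norm (ba_sub A (T x) (T y)) <= M * ba_norm (ba_sub A x y).
Proof. intros H HM; rewrite <- bl_sub by exact H; apply HM. Qed.

End G.

Section M.
Variable A : BanachAlgebra.
Variable a0 : A.
Variable n : nat.
Hypothesis Hann : left_annihilator_trivial A.
Hypothesis Hc : in_center A a0.
Hypothesis Hn : (2 <= n)%nat.

Lemma prodf_lpow : forall k i (a : nat -> A) y,
  (forall j, (i <= j < i + k)%nat -> a j = a0) -> a (i + k)%nat = y ->
  prodf A a i k = lpow A a0 k y.
Proof.
  induction k; intros i a y H H0.
  - simpl. rewrite Nat.add_0_r in H0. exact H0.
  - simpl. rewrite H by lia. f_equal. apply IHk.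
    + intros; apply H; lia.
    + rewrite <- H0; f_equal; lia.
Qed.

Lemma prodf_lpow2 : forall k i (a : nat -> A),
  (forall j, (i <= j < i + k)%nat -> a j = a0) ->
  prodf A a i (S k) = lpow A a0 k (ba_mul (a (i + k)%nat) (a (S (i + k)))).
Proof.
  induction k; intros i a H.
  - simpl. rewrite Nat.add_0_r; reflexivity.
  - change (prodf A a i (S (S k))) with (ba_mul (a i) (prodf A a (S i) (S k))).
    rewrite IHk by (intros; apply H; lia). rewrite H by lia. simpl.
    rewrite Nat.add_succ_r; reflexivity.
Qed.

Lemma lpow_central k (x y : A) : lpow A a0 k (ba_mul x y) = ba_mul x (lpow A a0 k y).
Proof.
  induction k; simpl. reflexivity.
  rewrite IHk, ba_mulA, Hc, <- ba_mulA; reflexivity.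
Qed.

Lemma nmult_right (T : A -> A) x y : is_n_multiplier A n T ->
  T (lpow A a0 (n - 2) (ba_mul x y)) = ba_mul (T (lpow A a0 (n - 2) x)) y.
Proof.
  intros [_ HT].
  set (a := fun j => if Nat.eqb j n then y else if Nat.eqb j (n - 1) then x else a0).
  destruct (HT a) as [_ H2].
  assert (E1 : prodf A a 1 (n - 1) = lpow A a0 (n - 2) (ba_mul x y)).
  { replace (n - 1)%nat with (S (n - 2)) by lia.
    rewrite (prodf_lpow2 (n - 2) 1 a).
    - replace (1 + (n - 2))%nat with (n - 1)%nat by lia.
      replace (S (n - 1)) with n by lia. unfold a.
      rewrite Nat.eqb_refl, (proj2 (Nat.eqb_neq (n - 1) n)) by lia. rewrite Nat.eqb_refl.
      reflexivity.
    - intros j Hj; unfold a.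
      rewrite (proj2 (Nat.eqb_neq j n)) by lia. rewrite (proj2 (Nat.eqb_neq j (n - 1))) by lia.
      reflexivity. }
  assert (E2 : prodf A a 1 (n - 2) = lpow A a0 (n - 2) x).
  { apply prodf_lpow.
    - intros j Hj; unfold a.
      rewrite (proj2 (Nat.eqb_neq j n)) by lia. rewrite (proj2 (Nat.eqb_neq j (n - 1))) by lia.
      reflexivity.
    - replace (1 + (n - 2))%nat with (n - 1)%nat by lia. unfold a.
      rewrite (proj2 (Nat.eqb_neq (n - 1) n)) by lia. rewrite Nat.eqb_refl. reflexivity. }
  assert (E3 : a n = y) by (unfold a; rewrite Nat.eqb_refl; reflexivity).
  rewrite E1, E2, E3 in H2. exact H2.
Qed.

Lemma nmult_left (T : A -> A) x y : is_n_multiplier A n T ->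
  T (lpow A a0 (n - 2) (ba_mul x y)) = ba_mul x (T (lpow A a0 (n - 2) y)).
Proof.
  intros [_ HT].
  set (a := fun j => if Nat.eqb j 1 then x else if Nat.eqb j n then y else a0).
  destruct (HT a) as [H1 _].
  assert (E2 : prodf A a 2 (n - 2) = lpow A a0 (n - 2) y).
  { apply prodf_lpow.
    - intros j Hj; unfold a.
      rewrite (proj2 (Nat.eqb_neq j 1)) by lia. rewrite (proj2 (Nat.eqb_neq j n)) by lia.
      reflexivity.
    - replace (2 + (n - 2))%nat with n by lia. unfold a.
      rewrite (proj2 (Nat.eqb_neq n 1)) by lia. rewrite Nat.eqb_refl. reflexivity. }
  assert (E1 : prodf A a 1 (n - 1) = ba_mul x (prodf A a 2 (n - 2))).
  { replace (n - 1)%nat with (S (n - 2)) by lia. reflexivity. }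
  assert (E3 : a 1%nat = x) by reflexivity.
  rewrite E1, E2, E3 in H1. rewrite lpow_central. exact H1.
Qed.

Definition mult (U : A -> A) : Prop :=
  forall x y, U (ba_mul x y) = ba_mul x (U y) /\ U (ba_mul x y) = ba_mul (U x) y.

Definition Mset := M_a0n A a0 n.

Lemma bl_lpow k : bounded_linear A (lpow A a0 k).
Proof.
  induction k.
  - split; [|split]; simpl; auto. exists 1; intros; lra.
  - destruct IHk as [Ha [Hs [M HM]]]. split; [|split]; simpl.
    + intros; rewrite Ha, ba_mulDr; reflexivity.
    + intros; rewrite Hs, ba_scal_mulr; reflexivity.
    + exists (ba_norm a0 * M); intro x. eapply Rle_trans. apply ba_norm_mul.
      rewrite Rmult_assoc. apply Rmult_le_compat_l. apply norm_ge0. apply HM.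
Qed.

Lemma M_bl U : Mset U -> bounded_linear A U.
Proof.
  intros [T [[HbT _] HU]]. apply bl_ext with (V := fun x => T (lpow A a0 (n - 2) x)).
  exact HU. apply bl_comp; auto. apply bl_lpow.
Qed.

Lemma M_mult U : Mset U -> mult U.
Proof.
  intros [T [HT HU]] x y. unfold T_a0n in HU. rewrite !HU. split.
  apply nmult_left; auto. apply nmult_right; auto.
Qed.

Lemma mult_comm U V : mult U -> mult V -> forall z, U (V z) = V (U z).
Proof.
  intros HU HV z.
  assert (K : forall x y, U (V (ba_mul x y)) = V (U (ba_mul x y))).
  { intros x y. rewrite (proj1 (HV x y)), (proj2 (HU x (V y))).
    rewrite (proj2 (HU x y)), (proj1 (HV (U x) y)). reflexivity. }
  apply sub_eq0. apply Hann. intro b.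
  rewrite mul_subl. rewrite <- (proj2 (HU (V z) b)), <- (proj2 (HV z b)).
  rewrite <- (proj2 (HV (U z) b)), <- (proj2 (HU z b)), K. apply sub_self.
Qed.

Lemma M_zero : Mset (fun _ => ba_zero).
Proof.
  exists (fun _ => ba_zero). split. split. apply bl_const0.
  intro a; rewrite mul0r, mul0l; split; reflexivity.
  intros; reflexivity.
Qed.

Lemma M_add U V : Mset U -> Mset V -> Mset (fun x => ba_add (U x) (V x)).
Proof.
  intros [T1 [[Hb1 H1] HU]] [T2 [[Hb2 H2] HV]].
  exists (fun y => ba_add (T1 y) (T2 y)). split. split. apply bl_add; auto.
  intro a. destruct (H1 a) as [H1a H1b]; destruct (H2 a) as [H2a H2b].
  split. rewrite H1a, H2a, <- ba_mulDr. reflexivity.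
  rewrite H1b, H2b, ba_mulDl; reflexivity.
  intro x; rewrite HU, HV; reflexivity.
Qed.

Lemma M_scal r U : Mset U -> Mset (fun x => ba_scal r (U x)).
Proof.
  intros [T1 [[Hb1 H1] HU]].
  exists (fun y => ba_scal r (T1 y)). split. split. apply bl_scal; auto.
  intro a. destruct (H1 a) as [H1a H1b].
  split. rewrite H1a, ba_scal_mulr; reflexivity.
  rewrite H1b, ba_scal_mull; reflexivity.
  intro x; rewrite HU; reflexivity.
Qed.

Lemma M_comp U V : Mset U -> Mset V -> Mset (fun x => U (V x)).
Proof.
  intros HUm [T2 [[Hb2 H2] HV]].
  pose proof (M_mult U HUm) as HU. pose proof (M_bl U HUm) as HbU.
  exists (fun y => U (T2 y)). split. split. apply bl_comp; auto.
  intro a. destruct (H2 a) as [H2a H2b].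
  split. rewrite H2a, (proj1 (HU _ _)); reflexivity.
  rewrite H2b, (proj2 (HU _ _)); reflexivity.
  intro x; rewrite HV; reflexivity.
Qed.

Definition Sc := op_closure A Mset.

Lemma Sc_bl U : Sc U -> bounded_linear A U.
Proof. intros [H _]; exact H. Qed.

Lemma approx_norm (V V' : A -> A) e MV x : opdist_le A V V' e ->
  (forall z, ba_norm (V z) <= MV * ba_norm z) ->
  ba_norm (V' x) <= (MV + e) * ba_norm x.
Proof.
  intros Hd HM. eapply Rle_trans. apply (norm_le_sub A (V x)).
  specialize (Hd x); specialize (HM x). lra.
Qed.

Lemma Sc_zero : Sc (fun _ => ba_zero).
Proof.
  split. apply bl_const0. intros eps Heps. exists (fun _ => ba_zero). split. apply M_zero.
  intro x. rewrite sub_self, norm0. pose proof (norm_ge0 A x). nra.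
Qed.

Lemma Sc_add U V : Sc U -> Sc V -> Sc (fun x => ba_add (U x) (V x)).
Proof.
  intros [HbU HU] [HbV HV]. split. apply bl_add; auto.
  intros eps Heps. destruct (HU (eps/2) ltac:(lra)) as [U' [HU'1 HU'2]].
  destruct (HV (eps/2) ltac:(lra)) as [V' [HV'1 HV'2]].
  exists (fun x => ba_add (U' x) (V' x)). split. apply M_add; auto.
  intro x. rewrite sub_add2. eapply Rle_trans. apply ba_norm_tri.
  specialize (HU'2 x); specialize (HV'2 x). lra.
Qed.

Lemma Sc_scal r U : Sc U -> Sc (fun x => ba_scal r (U x)).
Proof.
  intros [HbU HU]. split. apply bl_scal; auto.
  intros eps Heps. pose proof (Rabs_pos r).
  destruct (HU (eps / (Rabs r + 1))) as [U' [HU'1 HU'2]].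
  { apply Rdiv_lt_0_compat; lra. }
  exists (fun x => ba_scal r (U' x)). split. apply M_scal; auto.
  intro x. rewrite sub_scal, ba_norm_scal. specialize (HU'2 x).
  pose proof (norm_ge0 A x).
  assert (Hq : Rabs r * (eps / (Rabs r + 1)) <= eps).
  { unfold Rdiv. rewrite <- Rmult_assoc.
    apply (Rmult_le_reg_r (Rabs r + 1)). lra.
    rewrite Rmult_assoc, Rinv_l by lra. nra. }
  eapply Rle_trans. apply Rmult_le_compat_l. apply Rabs_pos. exact HU'2.
  rewrite <- Rmult_assoc. apply Rmult_le_compat_r; auto.
Qed.

Lemma Sc_comp U V : Sc U -> Sc V -> Sc (fun x => U (V x)).
Proof.
  intros [HbU HU] [HbV HV]. split. apply bl_comp; auto.
  intros eps Heps.
  destruct (bl_bound A U HbU) as [MU [MU0 HMU]].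
  destruct (bl_bound A V HbV) as [MV [MV0 HMV]].
  set (e := Rmin 1 (eps / (MU + MV + 1))).
  assert (He0 : 0 < e). { apply Rmin_pos. lra. apply Rdiv_lt_0_compat; lra. }
  assert (He1 : e <= 1) by apply Rmin_l.
  assert (He2 : e * (MU + MV + 1) <= eps).
  { assert (e <= eps / (MU + MV + 1)) by apply Rmin_r.
    apply (Rmult_le_compat_r (MU + MV + 1)) in H; [|lra].
    unfold Rdiv in H. rewrite Rmult_assoc, Rinv_l in H by lra. lra. }
  destruct (HU e He0) as [U' [HU'1 HU'2]].
  destruct (HV e He0) as [V' [HV'1 HV'2]].
  exists (fun x => U' (V' x)). split. apply M_comp; auto.
  intro x. eapply Rle_trans. apply (norm_sub_tri A _ (U (V' x))).
  pose proof (bl_lip A U MU (V x) (V' x) HbU HMU) as L1.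
  pose proof (approx_norm V V' e MV x HV'2 HMV) as L2.
  specialize (HV'2 x). specialize (HU'2 (V' x)).
  pose proof (norm_ge0 A x). pose proof (norm_ge0 A (ba_sub A (V x) (V' x))).
  assert (ba_norm (ba_sub A (U (V x)) (U (V' x))) <= MU * (e * ba_norm x)).
  { eapply Rle_trans. exact L1. apply Rmult_le_compat_l; auto. }
  assert (e * ba_norm (V' x) <= e * ((MV + e) * ba_norm x)).
  { apply Rmult_le_compat_l; lra. }
  nra.
Qed.

Lemma Sc_closed U : op_closure A Sc U -> Sc U.
Proof.
  intros [HbU HU]. split; auto. intros eps Heps.
  destruct (HU (eps/2) ltac:(lra)) as [V [[HbV HV] HUV]].
  destruct (HV (eps/2) ltac:(lra)) as [W [HW HVW]].
  exists W; split; auto. intro x. eapply Rle_trans. apply (norm_sub_tri A _ (V x)).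
  specialize (HUV x); specialize (HVW x). lra.
Qed.

Lemma Sc_comm U V : Sc U -> Sc V -> forall x, U (V x) = V (U x).
Proof.
  intros [HbU HU] [HbV HV] x. apply sub_eq0. apply norm_small. intros eps Heps.
  destruct (bl_bound A U HbU) as [MU [MU0 HMU]].
  destruct (bl_bound A V HbV) as [MV [MV0 HMV]].
  set (K := (2 * MU + 2 * MV + 2) * (ba_norm x + 1)).
  assert (HK : 0 < K). { unfold K. pose proof (norm_ge0 A x). nra. }
  set (e := Rmin 1 (eps / K)).
  assert (He0 : 0 < e). { apply Rmin_pos. lra. apply Rdiv_lt_0_compat; lra. }
  assert (He1 : e <= 1) by apply Rmin_l.
  assert (He2 : e * K <= eps).
  { assert (e <= eps / K) by apply Rmin_r.
    apply (Rmult_le_compat_r K) in H; [|lra].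
    unfold Rdiv in H. rewrite Rmult_assoc, Rinv_l in H by lra. lra. }
  destruct (HU e He0) as [U' [HU'1 HU'2]].
  destruct (HV e He0) as [V' [HV'1 HV'2]].
  pose proof (mult_comm U' V' (M_mult U' HU'1) (M_mult V' HV'1) x) as Hc'.
  destruct (bl_bound A U' (M_bl U' HU'1)) as [MU' [MU'0 HMU']].
  pose proof (approx_norm U U' e MU x HU'2 HMU) as NU'.
  pose proof (approx_norm V V' e MV x HV'2 HMV) as NV'.
  pose proof (norm_ge0 A x) as Nx.
  (* U(Vx) ~ U'(Vx) ~ U'(V'x) = V'(U'x) ~ V'(Ux) ~ V(Ux) *)
  assert (D1 : ba_norm (ba_sub A (U (V x)) (U' (V x))) <= e * (MV * ba_norm x)).
  { eapply Rle_trans. apply HU'2. apply Rmult_le_compat_l. lra. apply HMV. }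
  assert (D2 : ba_norm (ba_sub A (U' (V x)) (U' (V' x))) <= (MU + e) * (e * ba_norm x)).
  { rewrite <- bl_sub by (apply M_bl; auto).
    eapply Rle_trans. apply (approx_norm U U' e MU _ HU'2 HMU).
    apply Rmult_le_compat_l. lra. apply HV'2. }
  assert (D3 : ba_norm (ba_sub A (V' (U' x)) (V' (U x))) <= (MV + e) * (e * ba_norm x)).
  { rewrite <- bl_sub by (apply M_bl; auto).
    eapply Rle_trans. apply (approx_norm V V' e MV _ HV'2 HMV).
    apply Rmult_le_compat_l. lra. rewrite norm_sub_sym. apply HU'2. }
  assert (D4 : ba_norm (ba_sub A (V' (U x)) (V (U x))) <= e * (MU * ba_norm x)).
  { rewrite norm_sub_sym. eapply Rle_trans. apply HV'2. apply Rmult_le_compat_l. lra. apply HMU. }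
  assert (T : ba_norm (ba_sub A (U (V x)) (V (U x))) <=
     e * (MV * ba_norm x) + (MU + e) * (e * ba_norm x) + (MV + e) * (e * ba_norm x)
     + e * (MU * ba_norm x)).
  { eapply Rle_trans. apply (norm_sub_tri A _ (U' (V x))).
    eapply Rle_trans. apply Rplus_le_compat_l. apply (norm_sub_tri A _ (U' (V' x))).
    eapply Rle_trans. apply Rplus_le_compat_l. apply Rplus_le_compat_l.
    rewrite Hc'. apply (norm_sub_tri A _ (V' (U x))).
    lra. }
  eapply Rle_trans. exact T. eapply Rle_trans; [|exact He2]. unfold K.
  assert (0 <= e * ba_norm x) by nra.
  assert (e * e * ba_norm x <= e * ba_norm x) by nra.
  nra.
Qed.

End M.

Theorem mainTheorem9 (A : BanachAlgebra) (a0 : A) (n : nat) :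
  left_annihilator_trivial A ->
  in_center A a0 -> a0 <> ba_zero ->
  (3 <= n)%nat ->
  is_commutative_Banach_subalgebra A (S_n A a0 n).
Proof.
  intros Hann Hc _ Hn.
  assert (Hn2 : (2 <= n)%nat) by lia.
  unfold is_commutative_Banach_subalgebra, S_n.
  split; [|split; [|split; [|split; [|split; [|split]]]]].
  - apply Sc_bl.
  - apply Sc_zero.
  - intros; apply Sc_add; auto.
  - intros; apply Sc_scal; auto.
  - intros; apply Sc_comp; auto.
  - intros; apply Sc_closed; auto.
  - intros; eapply Sc_comm; eauto.
Qed.
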